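(* Let $q=(x,y)$ be a solution of the planar Stark problem $\ddot x=-x/r^3+1$, $\ddot y=-y/r^3$ ($r=\sqrt{x^2+y^2}$) with energy $H$ and constant $c$, and let $(\xi(\tau),\eta(\tau))$ be its regularized parabolic coordinates. If $\xi$ and $\eta$ are both periodic functions of $\tau$, with minimal positive periods $T_\xi$ and $T_\eta$ respectively, then $T_\xi>T_\eta$.
   Context: Energy: $H=\frac12(\dot x^2+\dot y^2)-\frac1r-x$. The constant $c$ is the conserved quantity $c=-\dot y(x\dot y-y\dot x)+\frac{x}{r}-\frac12y^2$. Regularized parabolic coordinates: $\xi^2=r+x$, $\eta^2=r-x$, with new time $\tau$ defined by $dt=(\xi^2+\eta^2)\,d\tau$; writing $'=d/d\tau$, they satisfy $\xi'^2=\xi^4+2H\xi^2+2(c+1)$ and $\eta'^2=-\eta^4+2H\eta^2-2(c-1)$, i.e. $\xi''=2\xi^3+2H\xi$, $\eta''=-2\eta^3+2H\eta$. *)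

(* Defs.v *)
From Stdlib Require Import Reals.
From Coquelicot Require Import Coquelicot.
Open Scope R_scope.

Definition rad (x y : R) : R := sqrt (x ^ 2 + y ^ 2).

Definition stark_solution (x y : R -> R) : Prop :=
  forall t, 0 < x t ^ 2 + y t ^ 2 ->
    ex_derive x t /\ ex_derive y t /\
    is_derive (Derive x) t (- x t / (rad (x t) (y t)) ^ 3 + 1) /\
    is_derive (Derive y) t (- y t / (rad (x t) (y t)) ^ 3).

Definition stark_energy (x y : R -> R) (t : R) : R :=
  / 2 * (Derive x t ^ 2 + Derive y t ^ 2) - / rad (x t) (y t) - x t.

Definition stark_c (x y : R -> R) (t : R) : R :=
  - Derive y t * (x t * Derive y t - y t * Derive x t)
  + x t / rad (x t) (y t) - y t ^ 2 / 2.

(* (xi, eta) are the regularized parabolic coordinates of the Stark solution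
   (x, y) with energy H and constant c, the new time tau being related to t by
   dt = (xi^2 + eta^2) dtau through the time map tm (t = tm tau).
   xi^2 = r + x, eta^2 = r - x amounts to x = (xi^2 - eta^2)/2 and
   y = xi * eta (sign convention for the square root). *)
Definition regularized_stark (H c : R) (x y xi eta tm : R -> R) : Prop :=
  stark_solution x y /\
  (forall t, 0 < x t ^ 2 + y t ^ 2 ->
     stark_energy x y t = H /\ stark_c x y t = c) /\
  (forall tau,
     is_derive tm tau (xi tau ^ 2 + eta tau ^ 2) /\
     x (tm tau) = (xi tau ^ 2 - eta tau ^ 2) / 2 /\
     y (tm tau) = xi tau * eta tau) /\
  (forall tau,
     ex_derive xi tau /\ ex_derive eta tau /\
     Derive xi tau ^ 2 = xi tau ^ 4 + 2 * H * xi tau ^ 2 + 2 * (c + 1) /\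
     Derive eta tau ^ 2 = - eta tau ^ 4 + 2 * H * eta tau ^ 2 - 2 * (c - 1) /\
     is_derive (Derive xi) tau (2 * xi tau ^ 3 + 2 * H * xi tau) /\
     is_derive (Derive eta) tau (- 2 * eta tau ^ 3 + 2 * H * eta tau)).

Definition min_period (f : R -> R) (T : R) : Prop :=
  0 < T /\ (forall s, f (s + T) = f s) /\
  (forall T', 0 < T' < T -> exists s, f (s + T') <> f s).

(* Main.v *)
Require Import Defs.
From Stdlib Require Import Reals Lra Psatz.
From Coquelicot Require Import Coquelicot.
Open Scope R_scope.

Lemma cont_of_der (f : R -> R) x : ex_derive f x -> continuity_pt f x.
Proof. intro H. apply continuity_pt_filterlim. apply (ex_derive_continuous f x H). Qed.

Lemma mvt_simple (f df : R -> R) a b :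
  (forall x, is_derive f x (df x)) ->
  exists c, Rmin a b <= c <= Rmax a b /\ f b - f a = df c * (b - a).
Proof.
  intro Hd. apply MVT_gen.
  - intros; apply Hd.
  - intros. apply cont_of_der. eexists; apply Hd.
Qed.

Lemma deriv0_const (f : R -> R) a b :
  (forall x, is_derive f x 0) -> f a = f b.
Proof.
  intro Hd. destruct (mvt_simple f (fun _ => 0) a b Hd) as [c [_ Hc]]. lra.
Qed.

Lemma deriv_mono (f df : R -> R) a b :
  (forall x, is_derive f x (df x)) -> (forall x, 0 <= df x) -> a <= b -> f a <= f b.
Proof.
  intros Hd Hp Hab. destruct (mvt_simple f df a b Hd) as [c [_ Hc]].
  specialize (Hp c). nra.
Qed.

Lemma deriv_ub (f df : R -> R) K a b :
  (forall x, is_derive f x (df x)) -> (forall x, df x <= K) -> a <= b -> f b - f a <= K * (b - a).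
Proof.
  intros Hd Hp Hab. destruct (mvt_simple f df a b Hd) as [c [_ Hc]].
  specialize (Hp c). nra.
Qed.

Lemma deriv_lb (f df : R -> R) K a b :
  (forall x, is_derive f x (df x)) -> (forall x, K <= df x) -> a <= b -> K * (b - a) <= f b - f a.
Proof.
  intros Hd Hp Hab. destruct (mvt_simple f df a b Hd) as [c [_ Hc]].
  specialize (Hp c). nra.
Qed.

Lemma antideriv (f : R -> R) a :
  (forall x, ex_derive f x) -> forall t, is_derive (fun t => RInt f a t) t (f t).
Proof.
  intros Hf t. apply (is_derive_RInt f (fun t => RInt f a t) a t).
  - apply filter_forall. intro b. cbv beta. apply (RInt_correct f a b). apply ex_RInt_continuous.
    intros. apply (ex_derive_continuous f), Hf.
  - apply (ex_derive_continuous f), Hf.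
Qed.

Lemma rot (s p th w : R -> R) t0 :
  (forall t, is_derive s t (w t * p t)) ->
  (forall t, is_derive p t (- w t * s t)) ->
  (forall t, is_derive th t (w t)) ->
  forall t, s t = s t0 * cos (th t - th t0) + p t0 * sin (th t - th t0) /\
            p t = p t0 * cos (th t - th t0) - s t0 * sin (th t - th t0).
Proof.
  intros Hs Hp Ht.
  set (E := fun t => (s t - (s t0 * cos (th t - th t0) + p t0 * sin (th t - th t0)))^2
     + (p t - (p t0 * cos (th t - th t0) - s t0 * sin (th t - th t0)))^2).
  assert (HE : forall t, is_derive E t 0).
  { intro t. unfold E.
    auto_derive.
    - repeat split; try exact I; first [exists (w t * p t); exact (Hs t) | exists (w t); exact (Ht t) | exists (- w t * s t); exact (Hp t)].
    - replace (Derive (fun x : R => s x) t) with (w t * p t) by (symmetry; apply is_derive_unique; exact (Hs t)).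
      replace (Derive (fun x : R => p x) t) with (- w t * s t) by (symmetry; apply is_derive_unique; exact (Hp t)).
      replace (Derive (fun x : R => th x) t) with (w t) by (symmetry; apply is_derive_unique; exact (Ht t)). ring. }
  intro t. assert (E t = E t0) by (apply deriv0_const; exact HE).
  assert (E t0 = 0). { unfold E. rewrite Rminus_diag, cos_0, sin_0. ring. }
  rewrite H0 in H. unfold E in H.
  set (u := s t - (s t0 * cos (th t - th t0) + p t0 * sin (th t - th t0))) in H.
  set (v := p t - (p t0 * cos (th t - th t0) - s t0 * sin (th t - th t0))) in H.
  assert (u = 0) by nra. assert (v = 0) by nra. unfold u, v in *. split; lra.
Qed.

Lemma per_max (f : R -> R) T : 0 < T -> (forall x, continuity_pt f x) ->
  (forall s, f (s + T) = f s) -> exists tM, forall t, f t <= f tM.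
Proof.
  intros HT Hc Hp.
  destruct (continuity_ab_maj f 0 T) as [Mx [HM _]]; [lra | intros; apply Hc |].
  exists Mx.
  assert (Hn : forall n : nat, forall t, - INR n * T <= t <= INR n * T + T -> f t <= f Mx).
  { induction n as [|n IH]; intros t Ht.
    - simpl in Ht. apply HM. lra.
    - rewrite S_INR in Ht.
      pose proof (pos_INR n).
      destruct (Rle_dec t (INR n * T + T)) as [h1|h1].
      + destruct (Rle_dec (- INR n * T) t) as [h2|h2].
        * apply IH; lra.
        * rewrite <- (Hp t). apply IH. nra.
      + replace t with ((t - T) + T) by ring. rewrite Hp. apply IH. nra. }
  intro t. destruct (INR_archimed T (Rabs t) HT) as [n Hn'].
  apply (Hn n). split_Rabs; nra.
Qed.

Lemma per_min (f : R -> R) T : 0 < T -> (forall x, continuity_pt f x) ->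
  (forall s, f (s + T) = f s) -> exists tm, forall t, f tm <= f t.
Proof.
  intros HT Hc Hp. destruct (per_max (fun x => - f x) T HT) as [tm Htm].
  - intro x. apply continuity_pt_opp, Hc.
  - intro s. rewrite Hp. reflexivity.
  - exists tm. intro t. specialize (Htm t). lra.
Qed.

Lemma der_at_max (f : R -> R) tM : ex_derive f tM -> (forall t, f t <= f tM) -> Derive f tM = 0.
Proof.
  intros Hd HM. rewrite <- (Derive_Reals f tM (ex_derive_Reals_0 f tM Hd)).
  apply (deriv_maximum f (tM - 1) (tM + 1)); try lra. intros; apply HM.
Qed.

Lemma der_at_min (f : R -> R) tm : ex_derive f tm -> (forall t, f tm <= f t) -> Derive f tm = 0.
Proof.
  intros Hd Hm.
  assert (Hd' : ex_derive (fun x => - f x) tm).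
  { destruct Hd as [l Hl]. exists (- l). apply (is_derive_opp f tm l Hl). }
  pose proof (der_at_max (fun x => - f x) tm Hd' ltac:(intro t; specialize (Hm t); lra)).
  rewrite Derive_opp in H. lra.
Qed.

Definition Pq (H c u : R) := u ^ 4 + 2 * H * u ^ 2 + 2 * (c + 1).

Lemma two_roots H c m M : Pq H c m = 0 -> Pq H c M = 0 -> m ^ 2 <> M ^ 2 ->
  forall u, Pq H c u = (u^2 - m^2) * (u^2 - M^2).
Proof.
  unfold Pq. intros Hm HM Hne u.
  assert (Hs : m^2 + M^2 = - 2 * H).
  { assert ((m^2 - M^2) * (m^2 + M^2 + 2 * H) = 0) by nra.
    apply Rmult_integral in H0. destruct H0; [exfalso; apply Hne; lra | lra]. }
  assert (Hp : 2 * (c + 1) = m^2 * M^2) by nra.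
  nra.
Qed.

Lemma xi_alg H c m M : m < M -> Pq H c m = 0 -> Pq H c M = 0 ->
  (forall u, m <= u <= M -> 0 <= Pq H c u) ->
  H < 0 /\ 0 < c + 1 /\ m < 0 /\ 0 < M /\ m = - M /\ M ^ 4 <= 2 * (c + 1).
Proof.
  intros Hlt Hm HM Hpos.
  assert (HMp : 0 < M).
  { destruct (Rlt_le_dec 0 M) as [h|h]; [exact h|exfalso].
    assert (Hne : m^2 <> M^2) by nra.
    set (u := (m + M) / 2).
    assert (Hu := Hpos u ltac:(unfold u; lra)).
    rewrite (two_roots H c m M Hm HM Hne u) in Hu.
    assert (u^2 - m^2 < 0) by (unfold u; nra).
    assert (u^2 - M^2 > 0) by (unfold u; nra). nra. }
  assert (Hmn : m < 0).
  { destruct (Rlt_le_dec m 0) as [h|h]; [exact h|exfalso].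
    assert (Hne : m^2 <> M^2) by nra.
    set (u := (m + M) / 2).
    assert (Hu := Hpos u ltac:(unfold u; lra)).
    rewrite (two_roots H c m M Hm HM Hne u) in Hu.
    assert (u^2 - m^2 > 0) by (unfold u; nra).
    assert (u^2 - M^2 < 0) by (unfold u; nra). nra. }
  assert (Heq : m = - M).
  { destruct (Req_dec (m^2) (M^2)) as [e|Hne]; [nra|exfalso].
    destruct (Rlt_le_dec (m^2) (M^2)) as [h|h].
    - set (u := (M - m) / 2).
      assert (Hu := Hpos u ltac:(unfold u; nra)).
      rewrite (two_roots H c m M Hm HM Hne u) in Hu.
      assert (-m < M) by nra.
      assert (u^2 - m^2 > 0) by (unfold u; nra).
      assert (u^2 - M^2 < 0) by (unfold u; nra). nra.
    - assert (M^2 < m^2) by lra.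
      assert (M < -m) by nra.
      set (u := (m - M) / 2).
      assert (Hu := Hpos u ltac:(unfold u; nra)).
      rewrite (two_roots H c m M Hm HM Hne u) in Hu.
      assert (u^2 - m^2 < 0) by (unfold u; nra).
      assert (u^2 - M^2 > 0) by (unfold u; nra). nra. }
  set (w2 := - 2 * H - M^2).
  assert (Hprod : 2 * (c + 1) = M^2 * w2) by (unfold Pq in HM; unfold w2; nra).
  assert (Hw2 : M^2 <= w2).
  { destruct (Rle_lt_dec (M^2) w2) as [h|h]; [exact h|exfalso].
    set (w := (Rmax w2 0 + M^2) / 2).
    assert (Hw0 : 0 <= w) by (unfold w; pose proof (Rmax_r w2 0); nra).
    assert (HwM : w < M^2) by (unfold w; unfold Rmax; destruct (Rle_dec w2 0); nra).
    assert (Hww2 : w2 < w) by (unfold w; unfold Rmax; destruct (Rle_dec w2 0); nra).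
    set (u := sqrt w).
    assert (Hu2 : u^2 = w) by (unfold u; simpl; rewrite Rmult_1_r; apply sqrt_sqrt; lra).
    assert (Hu0 : 0 <= u) by (unfold u; apply sqrt_pos).
    assert (HuM : u <= M).
    { destruct (Rle_lt_dec u M) as [h'|h']; [exact h'|]. nra. }
    assert (Hu := Hpos u ltac:(lra)).
    unfold Pq in Hu.
    assert (Pq H c u = (w - M^2) * (w - w2)).
    { unfold Pq. replace (u^4) with ((u^2)^2) by ring. rewrite Hu2, Hprod. unfold w2. ring. }
    unfold Pq in H0. nra. }
  assert (0 < M^2) by nra.
  assert (H < 0) by (unfold w2 in Hw2; lra).
  assert (0 < c + 1) by nra.
  repeat split; try lra; try nra.
Qed.

Lemma der_periodic (f : R -> R) T : (forall s, f (s + T) = f s) -> (forall x, ex_derive f x) ->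
  forall s, Derive f (s + T) = Derive f s.
Proof.
  intros Hp Hd s.
  assert (Hc : is_derive (fun x => f (x + T)) s (Derive f (s + T))).
  { auto_derive. - exact (Hd (s + T)). - rewrite Rmult_1_l; reflexivity. }
  rewrite <- (is_derive_unique _ _ _ Hc). apply Derive_ext. intro; apply Hp.
Qed.

Lemma cont_all (f : R -> R) : (forall x, ex_derive f x) -> continuity f.
Proof. intros Hd x. apply cont_of_der, Hd. Qed.

Lemma cos1_bound D : 0 <= D < 2 * PI -> cos D = 1 -> D = 0.
Proof.
  intros [h1 h2] Hc. destruct (Req_dec D 0) as [e|ne]; [exact e|exfalso].
  assert (Hs : 0 < sin (D / 2)) by (apply sin_gt_0; lra).
  replace D with (2 * (D / 2)) in Hc by field. rewrite cos_2a_sin in Hc. nra.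
Qed.

Lemma xi_part (H c : R) (xi : R -> R) (T : R) :
  (forall tau, ex_derive xi tau /\
     Derive xi tau ^ 2 = xi tau ^ 4 + 2 * H * xi tau ^ 2 + 2 * (c + 1) /\
     is_derive (Derive xi) tau (2 * xi tau ^ 3 + 2 * H * xi tau)) ->
  min_period xi T -> H < 0 /\ 0 < c + 1 /\ 2 * PI / sqrt (-2 * H) <= T.
Proof.
  intros Hode [HT [Hper Hmin]].
  assert (Hd : forall x, ex_derive xi x) by (intro; apply Hode).
  assert (Hcont : continuity xi) by (apply cont_all, Hd).
  destruct (Hmin (T / 2) ltac:(lra)) as [s0 Hs0].
  destruct (per_max xi T HT Hcont Hper) as [tM HtM].
  destruct (per_min xi T HT Hcont Hper) as [tm Htm].
  set (M := xi tM). set (m := xi tm).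
  assert (Hlt : m < M).
  { pose proof (HtM s0); pose proof (HtM (s0 + T/2)); pose proof (Htm s0); pose proof (Htm (s0 + T/2)).
    destruct (Rlt_le_dec m M) as [h|h]; [exact h|exfalso]. apply Hs0. unfold m, M in *. lra. }
  assert (HPM : Pq H c M = 0).
  { unfold Pq, M. destruct (Hode tM) as [_ [e _]]. rewrite <- e.
    rewrite (der_at_max xi tM (Hd tM) HtM). ring. }
  assert (HPm : Pq H c m = 0).
  { unfold Pq, m. destruct (Hode tm) as [_ [e _]]. rewrite <- e.
    rewrite (der_at_min xi tm (Hd tm) Htm). ring. }
  assert (Hpos : forall u, m <= u <= M -> 0 <= Pq H c u).
  { intros u Hu. destruct (IVT_gen xi tm tM u Hcont) as [t [_ Ht]].
    - rewrite Rmin_left, Rmax_right; unfold m, M in *; lra.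
    - rewrite <- Ht. unfold Pq. destruct (Hode t) as [_ [e _]]. rewrite <- e. apply pow2_ge_0. }
  destruct (xi_alg H c m M Hlt HPm HPM Hpos) as [HH [Hc1 [Hm0 [HM0 [Hmm HM4]]]]].
  destruct (IVT_gen xi tm tM 0 Hcont) as [t0 [_ Ht0]].
  { rewrite Rmin_left, Rmax_right; unfold m, M in *; lra. }
  repeat split; try assumption.
  set (k := sqrt (-2 * H)).
  assert (Hk : 0 < k) by (apply sqrt_lt_R0; lra).
  assert (Hk2 : k * k = -2 * H) by (apply sqrt_sqrt; lra).
  assert (Hxb : forall t, xi t ^ 4 <= 2 * (c + 1)).
  { intro t. pose proof (HtM t); pose proof (Htm t).
    assert (0 <= (M - xi t) * (M + xi t)) by (apply Rmult_le_pos; unfold m, M in *; lra).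
    assert (xi t ^ 2 <= M ^ 2) by nra.
    assert (xi t ^ 4 <= M ^ 4).
    { replace (xi t ^ 4) with ((xi t ^ 2) ^ 2) by ring. replace (M ^ 4) with ((M^2)^2) by ring.
      assert (0 <= xi t ^ 2) by apply pow2_ge_0. nra. }
    lra. }
  set (N := fun t => xi t ^ 4 + 2 * (c + 1)).
  assert (HN : forall t, 0 < N t) by (intro t; unfold N; pose proof (pow2_ge_0 (xi t ^ 2)); 
     replace (xi t ^ 4) with ((xi t ^ 2)^2) by ring; lra).
  set (s := fun t => k * xi t / sqrt (N t)).
  set (p := fun t => Derive xi t / sqrt (N t)).
  set (w := fun t => k * (2 * (c + 1) - xi t ^ 4) / N t).
  assert (Hsd : forall t, is_derive s t (w t * p t)).
  { intro t. unfold s, w, p, N. auto_derive.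
    - repeat split; try exact (Hd t). apply (HN t). apply Rgt_not_eq, sqrt_lt_R0, (HN t).
    - replace (Derive (fun x : R => xi x) t) with (Derive xi t) by reflexivity.
      pose proof (HN t) as HNt. unfold N in HNt.
      assert (Hsq := sqrt_sqrt (xi t ^ 4 + 2 * (c + 1)) ltac:(lra)).
      assert (Hsp := sqrt_lt_R0 (xi t ^ 4 + 2 * (c + 1)) HNt).
      set (S := sqrt (xi t ^ 4 + 2 * (c + 1))) in *.
      replace (xi t * (xi t * (xi t * (xi t * 1)))) with (xi t ^ 4) by ring. fold S.
      replace (2 * (c + 1)) with (S * S - xi t ^ 4) by lra.
      field. split; lra. }
  assert (Hpd : forall t, is_derive p t (- w t * s t)).
  { intro t. unfold s, w, p, N. auto_derive.
    - repeat split; try exact (Hd t). exists (2 * xi t ^ 3 + 2 * H * xi t); apply (Hode t).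
      apply (HN t). apply Rgt_not_eq, sqrt_lt_R0, (HN t).
    - replace (Derive (fun x : R => xi x) t) with (Derive xi t) by reflexivity.
      replace (Derive (fun x : R => Derive xi x) t) with (2 * xi t ^ 3 + 2 * H * xi t)
        by (symmetry; apply is_derive_unique; apply (Hode t)).
      pose proof (HN t) as HNt. unfold N in HNt.
      assert (Hsq := sqrt_sqrt (xi t ^ 4 + 2 * (c + 1)) ltac:(lra)).
      assert (Hsp := sqrt_lt_R0 (xi t ^ 4 + 2 * (c + 1)) HNt).
      set (S := sqrt (xi t ^ 4 + 2 * (c + 1))) in *.
      replace (xi t * (xi t * (xi t * (xi t * 1)))) with (xi t ^ 4) by ring. fold S.
      destruct (Hode t) as [_ [HD _]].
      replace H with (- (k * k) / 2) in * by lra.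
      replace (2 * (c + 1)) with (S * S - xi t ^ 4) in * by lra.
      set (X := xi t) in *. set (D := Derive xi t) in *.
      assert (HD2 : D * D = S * S - k * k * X * X) by nra.
      field_simplify; [| lra | lra].
      replace (D ^ 2) with (S * S - k * k * X * X) by (rewrite <- HD2; ring).
      field. lra. }
  assert (Hwd : forall t, ex_derive w t).
  { intro t. unfold w, N. auto_derive. repeat split; try exact (Hd t).
    pose proof (HN t) as h; unfold N in h.
    replace (xi t * (xi t * (xi t * (xi t * 1)))) with (xi t ^ 4) by ring. lra. }
  assert (Hw0 : forall t, 0 <= w t).
  { intro t. unfold w. apply Rmult_le_pos. 2: left; apply Rinv_0_lt_compat, HN.
    apply Rmult_le_pos; [lra|]. pose proof (Hxb t); lra. }
  assert (Hwk : forall t, w t <= k).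
  { intro t. unfold w. pose proof (HN t) as h. unfold N in *.
    apply (Rmult_le_reg_r (xi t ^ 4 + 2 * (c + 1))); [lra|].
    field_simplify; [|lra]. pose proof (pow2_ge_0 (xi t ^ 2)).
    replace (xi t ^ 4) with ((xi t ^ 2)^2) by ring. nra. }
  set (ta := t0 - T / 2).
  set (Th := fun t => RInt w ta t).
  assert (HTh : forall t, is_derive Th t (w t)) by (apply antideriv; exact Hwd).
  destruct (rot s p Th w ta Hsd Hpd HTh (ta + T)) as [R1 R2].
  assert (Hs1 : s (ta + T) = s ta) by (unfold s, N; rewrite Hper; reflexivity).
  assert (Hp1 : p (ta + T) = p ta) by (unfold p, N; rewrite Hper, (der_periodic xi T Hper Hd); reflexivity).
  assert (Hnorm : s ta ^ 2 + p ta ^ 2 = 1).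
  { unfold s, p. pose proof (HN ta) as h. unfold N in *.
    assert (Hsq := sqrt_sqrt (xi ta ^ 4 + 2 * (c + 1)) ltac:(lra)).
    assert (Hsp := sqrt_lt_R0 (xi ta ^ 4 + 2 * (c + 1)) h).
    destruct (Hode ta) as [_ [HD _]].
    set (S := sqrt (xi ta ^ 4 + 2 * (c + 1))) in *.
    field_simplify; [|lra]. replace (S ^ 2) with (S * S) by ring. rewrite Hsq, HD.
    replace (k ^ 2) with (k * k) by ring. rewrite Hk2. field. lra. }
  set (Dl := Th (ta + T) - Th ta) in *.
  assert (HcD : cos Dl = 1).
  { rewrite Hs1 in R1. rewrite Hp1 in R2.
    assert (E1 : s ta * s ta + p ta * p ta = (s ta * s ta + p ta * p ta) * cos Dl).
    { transitivity (s ta * (s ta * cos Dl + p ta * sin Dl) + p ta * (p ta * cos Dl - s ta * sin Dl)).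
      - rewrite <- R1, <- R2. ring.
      - ring. }
    replace (s ta * s ta + p ta * p ta) with 1 in E1 by (rewrite <- Hnorm; ring). lra. }
  destruct (Rle_lt_dec (2 * PI / k) T) as [Hfin|Hcon]; [exact Hfin|exfalso].
  assert (HkT : k * T < 2 * PI).
  { apply (Rmult_lt_compat_l k) in Hcon; [|lra]. field_simplify in Hcon; lra. }
  assert (HD0 : 0 <= Dl) by (unfold Dl; pose proof (deriv_mono Th w ta (ta + T) HTh Hw0 ltac:(lra)); lra).
  assert (HDk : Dl <= k * T) by (unfold Dl; pose proof (deriv_ub Th w k ta (ta + T) HTh Hwk ltac:(lra)); nra).
  assert (HDz : Dl = 0) by (apply cos1_bound; [lra | exact HcD]).
  assert (Hconst : forall t, ta <= t <= ta + T -> Th t = Th ta).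
  { intros t Ht. pose proof (deriv_mono Th w ta t HTh Hw0 ltac:(lra)).
    pose proof (deriv_mono Th w t (ta + T) HTh Hw0 ltac:(lra)). unfold Dl in HDz. lra. }
  assert (Hloc : is_derive Th t0 0).
  { apply (is_derive_ext_loc (fun _ => Th ta)).
    - assert (Hpos2 : 0 < T / 2) by lra.
      exists (mkposreal (T / 2) Hpos2). intros y Hy.
      change (Rabs (y - t0) < T / 2) in Hy.
      symmetry. apply Hconst. unfold ta. apply Rabs_lt_between' in Hy. lra.
    - exact (is_derive_const (Th ta) t0). }
  pose proof (is_derive_unique _ _ _ Hloc) as e1.
  rewrite (is_derive_unique _ _ _ (HTh t0)) in e1.
  unfold w, N in e1. rewrite Ht0 in e1. field_simplify in e1; [nra | lra].
Qed.

Lemma comp_der (G Dl : R -> R) dG dD x : is_derive G (Dl x) dG -> is_derive Dl x dD ->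
  is_derive (fun y => G (Dl y)) x (dD * dG).
Proof. intros h1 h2. exact (is_derive_comp G Dl x dG dD h1 h2). Qed.

Lemma minus_der (f g : R -> R) df dg x : is_derive f x df -> is_derive g x dg ->
  is_derive (fun y => f y - g y) x (df - dg).
Proof. intros h1 h2. exact (is_derive_minus f g x df dg h1 h2). Qed.

Lemma der_eq (f : R -> R) (x l lp : R) : is_derive f x l -> l = lp -> is_derive f x lp.
Proof. intros h e; subst; exact h. Qed.

Lemma eta_part (H c : R) (eta : R -> R) (T : R) : H < 0 ->
  (forall tau, ex_derive eta tau /\
     Derive eta tau ^ 2 = - eta tau ^ 4 + 2 * H * eta tau ^ 2 - 2 * (c - 1) /\
     is_derive (Derive eta) tau (- 2 * eta tau ^ 3 + 2 * H * eta tau)) ->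
  min_period eta T ->
  c < 1 /\ T <= 2 * PI / sqrt (- H + sqrt (H * H + 2 * (1 - c))).
Proof.
  intros HH Hode [HT [Hper Hmin]].
  assert (Hd : forall x, ex_derive eta x) by (intro; apply Hode).
  assert (Hc1 : c < 1).
  { destruct (Rlt_le_dec c 1) as [h|h]; [exact h|exfalso].
    assert (Hz : forall t, eta t = 0).
    { intro t. destruct (Hode t) as [_ [e _]]. pose proof (pow2_ge_0 (Derive eta t)).
      assert (eta t ^ 2 * (eta t ^ 2 - 2 * H) <= 0) by nra.
      assert (0 <= eta t ^ 2) by apply pow2_ge_0.
      assert (eta t ^ 2 <= 0) by nra. nra. }
    destruct (Hmin (T / 2) ltac:(lra)) as [s0 Hs0]. apply Hs0. rewrite !Hz. reflexivity. }
  split; [exact Hc1|].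
  set (R0 := sqrt (H * H + 2 * (1 - c))).
  assert (HR0 : R0 * R0 = H * H + 2 * (1 - c)) by (apply sqrt_sqrt; nra).
  assert (HR0p : 0 <= R0) by apply sqrt_pos.
  assert (HR0H : - H < R0) by nra.
  set (b2 := H + R0). set (B2 := - H + R0).
  assert (Hb2 : 0 < b2) by (unfold b2; lra).
  assert (HB2 : 0 < B2) by (unfold B2; lra).
  set (b := sqrt b2).
  assert (Hb : 0 < b) by (apply sqrt_lt_R0; lra).
  assert (Hbb : b * b = b2) by (apply sqrt_sqrt; lra).
  assert (HQ : forall t, Derive eta t ^ 2 = (b2 - eta t ^ 2) * (eta t ^ 2 + B2)).
  { intro t. destruct (Hode t) as [_ [e _]]. rewrite e. unfold b2, B2. nra. }
  set (s := fun t => eta t / b).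
  set (p := fun t => Derive eta t / (b * sqrt (B2 + eta t ^ 2))).
  set (w := fun t => sqrt (B2 + eta t ^ 2)).
  assert (HS : forall t, 0 < B2 + eta t ^ 2) by (intro t; pose proof (pow2_ge_0 (eta t)); lra).
  assert (Hsd : forall t, is_derive s t (w t * p t)).
  { intro t. unfold s, w, p. auto_derive.
    - exact (Hd t).
    - replace (Derive (fun x : R => eta x) t) with (Derive eta t) by reflexivity.
      assert (Hsp := sqrt_lt_R0 _ (HS t)). field. lra. }
  assert (Hpd : forall t, is_derive p t (- w t * s t)).
  { intro t. unfold s, w, p. auto_derive.
    - replace (eta t * (eta t * 1)) with (eta t ^ 2) by ring.
      repeat split; try exact (Hd t).
      + exists (- 2 * eta t ^ 3 + 2 * H * eta t); apply (proj2 (proj2 (Hode t))).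
      + apply (HS t).
      + apply Rgt_not_eq. apply Rmult_lt_0_compat; [lra|]. apply sqrt_lt_R0, (HS t).
    - replace (Derive (fun x : R => eta x) t) with (Derive eta t) by reflexivity.
      replace (Derive (fun x : R => Derive eta x) t) with (- 2 * eta t ^ 3 + 2 * H * eta t)
        by (symmetry; apply is_derive_unique; apply (Hode t)).
      pose proof (HS t) as HSt.
      assert (Hsq := sqrt_sqrt (B2 + eta t ^ 2) ltac:(lra)).
      assert (Hsp := sqrt_lt_R0 _ HSt).
      pose proof (HQ t) as HQt.
      replace (eta t * (eta t * 1)) with (eta t ^ 2) by ring.
      set (S := sqrt (B2 + eta t ^ 2)) in *.
      replace H with ((b2 - B2) / 2) by (unfold b2, B2; field).
      replace B2 with (S * S - eta t ^ 2) in * by lra.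
      set (X := eta t) in *. set (D := Derive eta t) in *.
      field_simplify; try (split; lra); try lra. rewrite HQt. field. split; lra. }
  assert (Hwd : forall t, ex_derive w t).
  { intro t. unfold w. auto_derive. replace (eta t * (eta t * 1)) with (eta t ^ 2) by ring.
    split; [exact (Hd t) | split; [apply (HS t) | exact I]]. }
  set (Th := fun t => RInt w 0 t).
  assert (HTh : forall t, is_derive Th t (w t)) by (apply antideriv; exact Hwd).
  pose proof (rot s p Th w 0 Hsd Hpd HTh) as Hrot.
  set (s0 := s 0) in *. set (p0 := p 0) in *.
  set (Dl := fun t => Th t - Th 0).
  set (g := fun th => sqrt (B2 + b2 * (s0 * cos th + p0 * sin th) ^ 2)).
  assert (Hgpos : forall th, sqrt B2 <= g th).
  { intro th. unfold g. apply sqrt_le_1_alt. pose proof (pow2_ge_0 (s0 * cos th + p0 * sin th)). nra. }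
  assert (HsB : 0 < sqrt B2) by (apply sqrt_lt_R0; lra).
  assert (Hgp : forall th, 0 < g th) by (intro th; pose proof (Hgpos th); lra).
  assert (Hwg : forall t, w t = g (Dl t)).
  { intro t. unfold w, g, Dl. destruct (Hrot t) as [e _]. f_equal.
    replace (eta t) with (b * s t) by (unfold s; field; lra). rewrite e.
    rewrite <- Hbb. ring. }
  assert (Hgd : forall th, ex_derive (fun th => / g th) th).
  { intro th. unfold g. auto_derive. repeat split.
    - pose proof (pow2_ge_0 (s0 * cos th + p0 * sin th)).
      replace ((s0 * cos th + p0 * sin th) * ((s0 * cos th + p0 * sin th) * 1)) with ((s0 * cos th + p0 * sin th) ^ 2) by ring. nra.
    - pose proof (Hgp th) as h. unfold g in h.
      replace ((s0 * cos th + p0 * sin th) * ((s0 * cos th + p0 * sin th) * 1)) with ((s0 * cos th + p0 * sin th) ^ 2) by ring. lra. }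
  set (G := fun th => RInt (fun th => / g th) 0 th).
  assert (HG : forall th, is_derive G th (/ g th)) by (apply antideriv; exact Hgd).
  assert (HDl : forall t, is_derive Dl t (w t)).
  { intro t. unfold Dl. apply (der_eq _ _ (w t - 0)).
    - apply (minus_der Th (fun _ => Th 0)). apply HTh. exact (is_derive_const (Th 0) t).
    - ring. }
  assert (HF : forall t, G (Dl t) - t = G (Dl 0) - 0).
  { intro t. apply (deriv0_const (fun t => G (Dl t) - t)). intro x.
    apply (der_eq _ _ (w x * / g (Dl x) - 1)).
    - apply (minus_der (fun t => G (Dl t)) (fun t => t)). apply comp_der. apply HG. apply HDl. exact (is_derive_id x).
    - rewrite Hwg. field. apply Rgt_not_eq, Hgp. }
  assert (Hinj : forall a c0, G a = G c0 -> a = c0).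
  { intros a c0 e. destruct (mvt_simple G (fun th => / g th) a c0 HG) as [z [_ Hz]].
    pose proof (Rinv_0_lt_compat _ (Hgp z)). rewrite e in Hz.
    assert ((/ g z) * (c0 - a) = 0) by lra. apply Rmult_integral in H1. lra. }
  assert (Hgper : forall th, g (th + 2 * PI) = g th).
  { intro th. unfold g. rewrite cos_plus, sin_plus, cos_2PI, sin_2PI. f_equal. ring. }
  assert (HK : forall th, G (th + 2 * PI) - G th = G (0 + 2 * PI) - G 0).
  { intro th. apply (deriv0_const (fun th => G (th + 2 * PI) - G th)). intro x.
    apply (der_eq _ _ (1 * / g (x + 2 * PI) - / g x)).
    - apply (minus_der (fun t => G (t + 2 * PI)) G). apply (comp_der G (fun t => t + 2 * PI)). apply HG.
      apply (der_eq _ _ (1 + 0)). apply (is_derive_plus (fun t => t) (fun _ => 2 * PI)).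
      exact (is_derive_id x). exact (is_derive_const (2 * PI) x). ring.
      apply HG.
    - rewrite Hgper. ring. }
  set (T1 := G (0 + 2 * PI) - G 0).
  assert (HT1 : 0 < T1 /\ T1 <= 2 * PI / sqrt B2).
  { destruct (mvt_simple G (fun th => / g th) 0 (0 + 2 * PI) HG) as [z [_ Hz]].
    fold T1 in Hz. pose proof (Rinv_0_lt_compat _ (Hgp z)). pose proof PI_RGT_0.
    assert (/ g z <= / sqrt B2) by (apply Rinv_le_contravar; [exact HsB | apply Hgpos]).
    rewrite Hz. split; [nra|]. unfold Rdiv. nra. }
  assert (Hper1 : forall t, eta (t + T1) = eta t).
  { intro t.
    assert (E : Dl (t + T1) = Dl t + 2 * PI).
    { apply Hinj.
      assert (G (Dl t + 2 * PI) = G (Dl t) + T1) by (pose proof (HK (Dl t)); unfold T1; lra).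
      pose proof (HF t). pose proof (HF (t + T1)). lra. }
    replace (eta (t + T1)) with (b * s (t + T1)) by (unfold s; field; lra).
    replace (eta t) with (b * s t) by (unfold s; field; lra).
    destruct (Hrot (t + T1)) as [e1 _]. destruct (Hrot t) as [e2 _].
    change (Th (t + T1) - Th 0) with (Dl (t + T1)) in e1.
    change (Th t - Th 0) with (Dl t) in e2.
    rewrite e1, e2, E, cos_plus, sin_plus, cos_2PI, sin_2PI. ring. }
  destruct (Rle_lt_dec T T1) as [h|h].
  - lra.
  - exfalso. destruct (Hmin T1 ltac:(lra)) as [z Hz]. apply Hz, Hper1.
Qed.

Theorem proposition3p1 :
  forall (H c : R) (x y xi eta tm : R -> R) (Txi Teta : R),
    regularized_stark H c x y xi eta tm ->
    min_period xi Txi ->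
    min_period eta Teta ->
    Teta < Txi.
Proof.
  intros H c x y xi eta tm Txi Teta [_ [_ [_ Hreg]]] Hxi Heta.
  destruct (xi_part H c xi Txi) as [HH [Hc1 Hxb]].
  { intro tau. destruct (Hreg tau) as [a [_ [b [_ [d _]]]]]. auto. }
  { exact Hxi. }
  destruct (eta_part H c eta Teta HH) as [Hc Heb].
  { intro tau. destruct (Hreg tau) as [_ [a [_ [b [_ d]]]]]. auto. }
  { exact Heta. }
  assert (HR0 : - H < sqrt (H * H + 2 * (1 - c))).
  { rewrite <- (sqrt_square (- H)) by lra. apply sqrt_lt_1_alt. nra. }
  assert (Hk : 0 < sqrt (-2 * H)) by (apply sqrt_lt_R0; lra).
  assert (HkB : sqrt (-2 * H) < sqrt (- H + sqrt (H * H + 2 * (1 - c)))).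
  { apply sqrt_lt_1_alt. lra. }
  assert (2 * PI / sqrt (- H + sqrt (H * H + 2 * (1 - c))) < 2 * PI / sqrt (-2 * H)).
  { unfold Rdiv. apply Rmult_lt_compat_l. pose proof PI_RGT_0; lra.
    apply Rinv_lt_contravar; [nra | exact HkB]. }
  lra.
Qed.
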